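(* Let $\mathfrak{g}$ be a Lie algebra with structure constants $c^\alpha_{\beta\gamma}$ in a basis $\{e_\alpha\}$. Suppose that an $\mathrm{End}(\mathfrak{g})$-valued vector field $\xi^\alpha_\beta{}^j$ on Minkowski space satisfies \[\partial^{(i}\xi^{|\alpha|}_\beta{}^{j)}=\eta^{ij}k^\alpha_\beta,\qquad \xi^\alpha_\beta{}^jc^\beta_{\gamma\delta}+c^\alpha_{\beta\gamma}\xi^\beta_\delta{}^j=0\] for some functions $k^\alpha_\beta$. Then $Q^\alpha_i=\xi^\alpha_\beta{}^jF^\beta_{ij}$ are the components of a first order generalized symmetry of the Yang-Mills equations.
   Context: Minkowski space has coordinates $x^i$, $i=0,\dots,3$, metric $\eta=\mathrm{diag}(-1,1,1,1)$ (used to raise/lower indices); round brackets denote symmetrization, with $|\alpha|$ excluded. $[e_\beta,e_\gamma]=c^\alpha_{\beta\gamma}e_\alpha$. Jet coordinates $x^i,a^\alpha_i,a^\alpha_{i,j_1},\dots$ for $\mathfrak{g}$-valued potentials $a^\alpha_i$; differential functions are smooth functions of finitely many jet coordinates; $D_i$ is the total derivative; $\nabla_iG^\alpha=D_iG^\alpha+c^\alpha_{\beta\gamma}a^\beta_iG^\gamma$; $[G,H]^\alpha=c^\alpha_{\beta\gamma}G^\beta H^\gamma$. Field tensor $F^\alpha_{ij}=a^\alpha_{j,i}-a^\alpha_{i,j}+c^\alpha_{\beta\gamma}a^\beta_ia^\gamma_j$; Yang-Mills equations $\nabla^jF_{ij}=0$, with $p$-fold prolonged solution manifold $\mathcal R^p$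 defined by $\nabla_{i_1}\cdots\nabla_{i_r}\nabla^jF_{i_{r+1}j}=0$, $0\le r\le p$. A generalized symmetry of order $p$ is a collection of $\mathfrak{g}$-valued differential functions $Q^\alpha_i$ of order $p$ with $\nabla^j\nabla_iQ_j-\nabla^j\nabla_jQ_i-[F_i{}^j,Q_j]=0$ on $\mathcal R^p$. *)

(* Defs.v *)
From HB Require Import structures.
From mathcomp Require Import all_boot all_order all_algebra.
From mathcomp Require Import all_classical all_reals all_analysis.
Set Implicit Arguments. Unset Strict Implicit. Unset Printing Implicit Defensive.
Import Order.TTheory GRing.Theory Num.Theory.
Import numFieldNormedType.Exports.
Local Open Scope ring_scope.

Section Jets.
Variables (R : realType) (n : nat).

Definition mink (i j : 'I_4) : R :=
  if i == j then (if (i : nat) == 0%N then -1 else 1) else 0.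

(* Lie algebra structure constants: [e_b, e_g] = c a b g e_a *)
Definition lie_structure (c : 'I_n -> 'I_n -> 'I_n -> R) : Prop :=
  (forall a b g, c a b g = - c a g b) /\
  (forall a b g d,
     \sum_(e < n) (c a b e * c e g d + c a g e * c e d b + c a d e * c e b g) = 0).

Definition partial (i : 'I_4) (f : 'rV[R]_4 -> R) : 'rV[R]_4 -> R :=
  fun x => derive f x (delta_mx 0 i).

Fixpoint iter_partial (l : seq 'I_4) (f : 'rV[R]_4 -> R) : 'rV[R]_4 -> R :=
  if l is i :: l' then partial i (iter_partial l' f) else f.

Definition smooth (f : 'rV[R]_4 -> R) : Prop :=
  forall (l : seq 'I_4) (x : 'rV[R]_4), differentiable (iter_partial l f) x.

(* A point of the infinite jet space: coordinates x^i and
   a^alpha_{i, j1 ... jk} = ju alpha i [:: j1; ...; jk]. *)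
Record jet := Jet { jx : 'rV[R]_4 ; ju : 'I_n -> 'I_4 -> seq 'I_4 -> R }.

Definition sym_jet (p : jet) : Prop :=
  forall a i (J J' : seq 'I_4), perm_eq J J' -> ju p a i J = ju p a i J'.

Definition dfun := jet -> R.
Definition gfun := 'I_n -> dfun.

(* total derivative D_i: derivative along the (Cartan) vector field
   d/dx^i + sum a^a_{j,J i} d/da^a_{j,J} *)
Definition Dtot (i : 'I_4) (f : dfun) : dfun := fun p =>
  derive1 (fun t : R => f (Jet (jx p + t *: delta_mx 0 i)
                              (fun a j J => ju p a j J + t * ju p a j (i :: J)))) 0.

Variable c : 'I_n -> 'I_n -> 'I_n -> R.

Definition nabla (i : 'I_4) (G : gfun) : gfun := fun a p =>
  Dtot i (G a) p + \sum_(b < n) \sum_(g < n) c a b g * ju p b i [::] * G g p.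

Definition nablas (l : seq 'I_4) (G : gfun) : gfun := foldr nabla G l.

Definition Fld (i j : 'I_4) : gfun := fun a p =>
  ju p a j [:: i] - ju p a i [:: j]
  + \sum_(b < n) \sum_(g < n) c a b g * ju p b i [::] * ju p g j [::].

Definition YM (i : 'I_4) : gfun := fun a p =>
  \sum_(j < 4) mink j j * nabla j (Fld i j) a p.

Definition on_Rp (k : nat) (p : jet) : Prop :=
  forall (l : seq 'I_4), (size l <= k)%N ->
  forall i a, nablas l (YM i) a p = 0.

Definition order_le (k : nat) (f : dfun) : Prop :=
  forall p1 p2 : jet, jx p1 = jx p2 ->
  (forall a i (J : seq 'I_4), (size J <= k)%N -> ju p1 a i J = ju p2 a i J) ->
  f p1 = f p2.

Definition linYM (Q : 'I_4 -> gfun) (i : 'I_4) : gfun := fun a p =>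
  \sum_(j < 4) mink j j * nabla j (nabla i (fun b => Q j b)) a p
  - \sum_(j < 4) mink j j * nabla j (nabla j (fun b => Q i b)) a p
  - \sum_(j < 4) \sum_(b < n) \sum_(g < n)
      c a b g * (mink j j * Fld i j b p) * Q j g p.

(* generalized symmetry of order k; Q i a = Q^a_i *)
Definition gen_symmetry (k : nat) (Q : 'I_4 -> gfun) : Prop :=
  (forall i a, order_le k (Q i a)) /\
  (forall p : jet, sym_jet p -> on_Rp k p -> forall i a, linYM Q i a p = 0).

End Jets.

(* Main.v *)
Require Import Defs.
From HB Require Import structures.
From mathcomp Require Import all_boot all_order all_algebra.
From mathcomp Require Import all_classical all_reals all_analysis.
From mathcomp Require Import ring lra.
Set Implicit Arguments. Unset Strict Implicit. Unset Printing Implicit Defensive.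
Import Order.TTheory GRing.Theory Num.Theory.
Import numFieldNormedType.Exports.
Local Open Scope ring_scope.

Section PA.
Variable R : realType.
Local Open Scope classical_set_scope.

Lemma is_derive_line (g : 'rV[R]_4 -> R) (y v : 'rV[R]_4) (s0 : R) :
  derivable g (s0 *: v + y) v ->
  is_derive s0 1 (fun s => g (s *: v + y)) ('D_v g (s0 *: v + y)).
Proof.
move=> dg.
have E : (fun h : R => h^-1 *: (((fun s => g (s *: v + y)) \o shift s0) (h *: 1)
           - (fun s => g (s *: v + y)) s0))
       = (fun h : R => h^-1 *: ((g \o shift (s0 *: v + y)) (h *: v) - g (s0 *: v + y))).
  apply: funext => h /=.
  by rewrite /shift /= [h *: 1]mulr1 scalerDl addrA.
split; first by rewrite /derivable E.
by rewrite /derive E.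
Qed.


Lemma partial_ext (f g : 'rV[R]_4 -> R) i x : (forall y, f y = g y) ->
  partial i f x = partial i g x.
Proof. by move=> H; have -> : f = g by apply: funext. Qed.

Lemma partial_cst (r : R) i x : partial i (fun _ => r) x = 0.
Proof. exact: (@derive_cst R 'rV[R]_4 R^o). Qed.

Lemma derivable_lin (f g : 'rV[R]_4 -> R) (r1 r2 : R) x v :
  derivable f x v -> derivable g x v ->
  derivable (fun y => r1 * f y + r2 * g y) x v /\
  'D_v (fun y => r1 * f y + r2 * g y) x = r1 * 'D_v f x + r2 * 'D_v g x.
Proof.
move=> df dg.
have -> : (fun y => r1 * f y + r2 * g y) = (r1 *: f + r2 *: g) :> ('rV[R]_4 -> R^o).
  by apply: funext.
split; first by apply: derivableD; apply: derivableZ.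
by rewrite deriveD ?deriveZ //; apply: derivableZ.
Qed.

Lemma partial_lin (f g : 'rV[R]_4 -> R) (r1 r2 : R) i x :
  differentiable f x -> differentiable g x ->
  partial i (fun y => r1 * f y + r2 * g y) x = r1 * partial i f x + r2 * partial i g x.
Proof.
move=> df dg; rewrite /partial.
have d1 : derivable f x (delta_mx 0 i) by exact: diff_derivable.
have d2 : derivable g x (delta_mx 0 i) by exact: diff_derivable.
by case: (derivable_lin r1 r2 d1 d2).
Qed.

Lemma partial_sum m (F : 'I_m -> 'rV[R]_4 -> R) i x :
  (forall k, derivable (F k) x (delta_mx 0 i)) ->
  partial i (fun y => \sum_(k < m) F k y) x = \sum_(k < m) partial i (F k) x.
Proof.
move=> H; rewrite /partial -fct_sumE.
by rewrite (@derive_sum R 'rV[R]_4 R^o).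
Qed.

Lemma cont_near (f : 'rV[R]_4 -> R) x e : differentiable f x -> 0 < e ->
  exists2 d, 0 < d & forall z, `|x - z| < d -> `|f x - f z| < e.
Proof.
move=> /differentiable_continuous /cvgrPdist_lt H e0.
have := H e e0; case/nbhs_ballP => d d0 Hd.
exists d => // z hz; apply: Hd.
by rewrite -ball_normE /ball_ /=.
Qed.

Lemma mvt_line2 (f : 'rV[R]_4 -> R) (v y1 y2 : 'rV[R]_4) (h : R) : 0 <= h ->
  (forall z, differentiable f z) ->
  exists2 c, c \in `[0, h]%R &
    (f (h *: v + y1) - f (h *: v + y2)) - (f (0 *: v + y1) - f (0 *: v + y2))
    = ('D_v f (c *: v + y1) - 'D_v f (c *: v + y2)) * h.
Proof.
move=> h0 df.
pose F1 := fun s : R => f (s *: v + y1).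
pose F2 := fun s : R => f (s *: v + y2).
have D : forall s : R, is_derive s (1:R) (F1 - F2 : R -> R)
    ('D_v f (s *: v + y1) - 'D_v f (s *: v + y2)).
  move=> s; apply: is_deriveB; apply: is_derive_line; exact: diff_derivable.
have C : {within `[0, h], continuous (F1 - F2 : R -> R)}.
  apply: continuous_subspaceT => s.
  apply: differentiable_continuous; apply/derivable1_diffP.
  exact: (@ex_derive _ _ _ _ _ _ _ (D s)).
have [c hc E] := MVT_segment h0 (fun s _ => D s) C.
exists c => //; move: E; rewrite subr0 => E; exact: E.
Qed.

Lemma mvt_line (f : 'rV[R]_4 -> R) (v y : 'rV[R]_4) (h : R) : 0 <= h ->
  (forall z, differentiable f z) ->
  exists2 c, c \in `[0, h]%R &
    f (h *: v + y) - f (0 *: v + y) = 'D_v f (c *: v + y) * h.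
Proof.
move=> h0 df.
pose F1 := fun s : R => f (s *: v + y).
have D : forall s : R, is_derive s (1:R) F1 ('D_v f (s *: v + y)).
  move=> s; apply: is_derive_line; exact: diff_derivable.
have C : {within `[0, h], continuous F1}.
  apply: continuous_subspaceT => s.
  apply: differentiable_continuous; apply/derivable1_diffP.
  exact: (@ex_derive _ _ _ _ _ _ _ (D s)).
have [c hc E] := MVT_segment h0 (fun s _ => D s) C.
exists c => //; move: E; rewrite subr0 => E; exact: E.
Qed.

Lemma itv_bound (c h : R) : c \in `[0, h]%R -> `|c| <= h.
Proof.
rewrite in_itv /= => /andP [c0 ch].
by rewrite ger0_norm.
Qed.

Lemma alg_key (h A B C D P1 P2 : R) : h != 0 ->
  A - B - (C - D) = P1 * h * h -> A - C - (B - D) = P2 * h * h -> P1 = P2.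
Proof.
move=> hn E1 E2; apply: (mulIf hn); apply: (mulIf hn).
by rewrite -E1 -E2; ring.
Qed.

Lemma schwarz_key (g : 'rV[R]_4 -> R) i j x (h : R) : smooth g -> 0 < h ->
  exists z1, exists z2,
    [/\ `|x - z1| <= h * (`|delta_mx 0 i : 'rV[R]_4| + `|delta_mx 0 j : 'rV[R]_4|),
        `|x - z2| <= h * (`|delta_mx 0 i : 'rV[R]_4| + `|delta_mx 0 j : 'rV[R]_4|) &
        partial j (partial i g) z1 = partial i (partial j g) z2].
Proof.
move=> sg h0; have h0' := ltW h0.
set ei := delta_mx 0 i : 'rV[R]_4; set ej := delta_mx 0 j : 'rV[R]_4.
have dg : forall z, differentiable g z := fun z => sg [::] z.
have dgi : forall z, differentiable (partial i g) z := fun z => sg [:: i] z.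
have dgj : forall z, differentiable (partial j g) z := fun z => sg [:: j] z.
have [c1 hc1 E1] := mvt_line2 ei (h *: ej + x) (0 *: ej + x) h0' dg.
have [c2 hc2 E2] := mvt_line ej (c1 *: ei + x) h0' dgi.
have [d1 hd1 F1] := mvt_line2 ej (h *: ei + x) (0 *: ei + x) h0' dg.
have [d2 hd2 F2] := mvt_line ei (d1 *: ej + x) h0' dgj.
exists (c2 *: ej + (c1 *: ei + x)), (d2 *: ei + (d1 *: ej + x)).
have nb : forall (a b : R) (u w : 'rV[R]_4), a \in `[0, h]%R -> b \in `[0, h]%R ->
    `|x - (a *: u + (b *: w + x))| <= h * (`|w| + `|u|).
  move=> a b u w ha hb.
  rewrite addrA opprD addrCA subrr addr0 normrN.
  apply: (le_trans (ler_normD _ _)); rewrite !normrZ mulrDr addrC.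
  by apply: lerD; apply: ler_wpM2r => //; apply: itv_bound.
split.
- by apply: nb.
- by rewrite [X in h * X]addrC; apply: nb.
rewrite (addrCA (c1 *: ei) (h *: ej)) (addrCA (c1 *: ei) (0 *: ej)) in E1.
have E2' : 'D_ei g (h *: ej + (c1 *: ei + x)) - 'D_ei g (0 *: ej + (c1 *: ei + x))
   = 'D_ej (partial i g) (c2 *: ej + (c1 *: ei + x)) * h := E2.
rewrite E2' in E1.
rewrite (addrCA (d1 *: ej) (h *: ei)) (addrCA (d1 *: ej) (0 *: ei)) in F1.
have F2' : 'D_ej g (h *: ei + (d1 *: ej + x)) - 'D_ej g (0 *: ei + (d1 *: ej + x))
   = 'D_ei (partial j g) (d2 *: ei + (d1 *: ej + x)) * h := F2.
rewrite F2' in F1.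
rewrite !scale0r !add0r in E1 F1.
rewrite (addrCA (h *: ej) (h *: ei)) in F1.
have hn : h != 0 by rewrite gt_eqF.
have E1' : g (h *: ei + (h *: ej + x)) - g (h *: ei + x) - (g (h *: ej + x) - g x) =
    partial j (partial i g) (c2 *: ej + (c1 *: ei + x)) * h * h := E1.
have F1' : g (h *: ei + (h *: ej + x)) - g (h *: ej + x) - (g (h *: ei + x) - g x) =
    partial i (partial j g) (d2 *: ei + (d1 *: ej + x)) * h * h := F1.
exact: (alg_key hn E1' F1').
Qed.

Lemma schwarz (g : 'rV[R]_4 -> R) i j x : smooth g ->
  partial i (partial j g) x = partial j (partial i g) x.
Proof.
move=> sg.
set Pij := partial i (partial j g); set Pji := partial j (partial i g).
have dij : differentiable Pij x := sg [:: i; j] x.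
have dji : differentiable Pji x := sg [:: j; i] x.
apply/eqP; apply/negPn/negP => neq.
set D := `|Pij x - Pji x|.
have D0 : 0 < D by rewrite normr_gt0 subr_eq0.
have e0 : 0 < D / 2 by rewrite divr_gt0.
have [d1 d10 H1] := cont_near dij e0.
have [d2 d20 H2] := cont_near dji e0.
set M := `|delta_mx 0 i : 'rV[R]_4| + `|delta_mx 0 j : 'rV[R]_4|.
have M0 : 0 <= M by rewrite addr_ge0.
set d := Num.min d1 d2.
have d0 : 0 < d by rewrite lt_min d10 d20.
set h := d / (M + 1).
have h0 : 0 < h by rewrite divr_gt0 // ltr_wpDl.
have hM : h * M < d.
  rewrite /h mulrAC ltr_pdivrMr ?ltr_wpDl //.
  by rewrite ltr_pM2l // ltrDl.
have [z1 [z2 [B1 B2 E]]] := schwarz_key i j x sg h0.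
have L1 : `|Pij x - Pij z2| < D / 2.
  by apply: H1; apply: (le_lt_trans B2); apply: (lt_le_trans hM); rewrite ge_min lexx.
have L2 : `|Pji x - Pji z1| < D / 2.
  by apply: H2; apply: (le_lt_trans B1); apply: (lt_le_trans hM); rewrite ge_min lexx orbT.
have E' : Pji z1 = Pij z2 := E.
move: L1 L2 E' D0; rewrite /D.
clear E.
move: (Pij x) (Pji x) (Pij z2) (Pji z1) => A B C C' L1 L2 E D0.
have T : `|A - B| <= `|A - C| + `|B - C'|.
  have -> : A - B = (A - C) - (B - C') by rewrite E; ring.
  exact: ler_normB.
have : `|A - B| < `|A - B|.
  apply: (le_lt_trans T); rewrite [X in _ < X](splitr `|A - B|); exact: ltrD.
by rewrite ltxx.
Qed.


End PA.

Section PB.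
Variables (R : realType) (n : nat).

Definition line (p : jet R n) (i : 'I_4) (t : R) : jet R n :=
  Jet (jx p + t *: delta_mx 0 i) (fun a j J => ju p a j J + t * ju p a j (i :: J)).

Lemma DtotE i (f : dfun R n) p : Dtot i f p = 'D_1 (fun t => f (line p i t)) 0.
Proof. by rewrite /Dtot derive1E. Qed.

Lemma line0 p i : line p i 0 = p.
Proof.
case: p => x u; rewrite /line /=; congr Jet; first by rewrite scale0r addr0.
by apply: funext => a; apply: funext => j; apply: funext => J; rewrite mul0r addr0.
Qed.

Inductive expr :=
| Ecst of R
| Eu of 'I_n & 'I_4 & seq 'I_4
| Ex of ('rV[R]_4 -> R)
| Eadd of expr & expr
| Emul of expr & expr.

Fixpoint eval (e : expr) (p : jet R n) : R :=
  match e with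
  | Ecst r => r
  | Eu a j J => ju p a j J
  | Ex g => g (jx p)
  | Eadd e1 e2 => eval e1 p + eval e2 p
  | Emul e1 e2 => eval e1 p * eval e2 p
  end.

Fixpoint deriv (i : 'I_4) (e : expr) : expr :=
  match e with
  | Ecst r => Ecst 0
  | Eu a j J => Eu a j (i :: J)
  | Ex g => Ex (partial i g)
  | Eadd e1 e2 => Eadd (deriv i e1) (deriv i e2)
  | Emul e1 e2 => Eadd (Emul (deriv i e1) e2) (Emul e1 (deriv i e2))
  end.

Fixpoint wf (e : expr) : Prop :=
  match e with
  | Ex g => smooth g
  | Eadd e1 e2 => wf e1 /\ wf e2
  | Emul e1 e2 => wf e1 /\ wf e2
  | _ => True
  end.

Lemma iter_partial_rcons (l : seq 'I_4) i (g : 'rV[R]_4 -> R) :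
  iter_partial l (partial i g) = iter_partial (rcons l i) g.
Proof. by elim: l => //= j l ->. Qed.

Lemma smooth_partial i (g : 'rV[R]_4 -> R) : smooth g -> smooth (partial i g).
Proof. by move=> sg l x; rewrite iter_partial_rcons; apply: sg. Qed.

Lemma smooth_diff (g : 'rV[R]_4 -> R) x : smooth g -> differentiable g x.
Proof. by move=> sg; apply: (sg [::]). Qed.

Lemma wf_deriv i e : wf e -> wf (deriv i e).
Proof.
elim: e => //=.
- by move=> g; apply: smooth_partial.
- by move=> e1 IH1 e2 IH2 [/IH1 ? /IH2 ?].
- by move=> e1 IH1 e2 IH2 [w1 w2]; split; split => //; [apply: IH1|apply: IH2].
Qed.

Lemma is_derive_x (g : 'rV[R]_4 -> R) (p : jet R n) i :
  differentiable g (jx p) ->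
  is_derive (0:R) 1 (fun t => g (jx (line p i t))) (partial i g (jx p)).
Proof.
move=> dg.
have -> : (fun t => g (jx (line p i t))) = (fun t => g (t *: delta_mx 0 i + jx p)).
  by apply: funext => t; rewrite /= addrC.
have := @is_derive_line R g (jx p) (delta_mx 0 i) 0.
rewrite scale0r add0r => H; apply: H.
exact: diff_derivable.
Qed.

Lemma ev_deriv e p i : wf e ->
  is_derive (0:R) 1 (fun t => eval e (line p i t)) (eval (deriv i e) p).
Proof.
elim: e => /=.
- by move=> r _; apply: is_derive_cst.
- move=> a j J _.
  have -> : (fun t => ju p a j J + t * ju p a j (i :: J))
          = (cst (ju p a j J) + (id * cst (ju p a j (i :: J)))) :> (R -> R).
    by apply: funext => t.
  apply: is_derive_eq.
  rewrite /= scaler0 !add0r; exact: mulr1.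
- by move=> g sg; apply: is_derive_x; apply: smooth_diff.
- move=> e1 IH1 e2 IH2 [w1 w2].
  exact: (is_deriveD (IH1 w1) (IH2 w2)).
- move=> e1 IH1 e2 IH2 [w1 w2].
  have H1 := IH1 w1; have H2 := IH2 w2.
  set F1 := (fun t => eval e1 (line p i t)) in H1.
  set F2 := (fun t => eval e2 (line p i t)) in H2.
  have -> : (fun t => eval e1 (line p i t) * eval e2 (line p i t)) = (F1 * F2) :> (R -> R).
    by apply: funext.
  apply: is_derive_eq.
  rewrite /F1 /F2 /= !line0.
  by rewrite addrC -[_ *: _]/(_ * _) -[X in _ + X]/(_ * _) [X in X + _]mulrC.
Qed.


Definition isE (f : dfun R n) := exists e, wf e /\ forall p, eval e p = f p.

Lemma isE_eq f : isE f -> exists e, wf e /\ f = eval e.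
Proof. by case=> e [w E]; exists e; split => //; apply: funext => p. Qed.

Lemma Dtot_eval e i p : wf e -> Dtot i (eval e) p = eval (deriv i e) p.
Proof. by move=> w; rewrite DtotE; apply: derive_val; apply: ev_deriv. Qed.

Lemma isE_der f i p : isE f -> is_derive (0:R) 1 (fun t => f (line p i t)) (Dtot i f p).
Proof.
move=> /isE_eq [e [w ->]]; rewrite Dtot_eval //; exact: ev_deriv.
Qed.

Lemma isE_Dtot f i : isE f -> isE (Dtot i f).
Proof.
move=> /isE_eq [e [w ->]]; exists (deriv i e); split; first exact: wf_deriv.
by move=> p; rewrite Dtot_eval.
Qed.

Lemma isE_cst (r : R) : isE (fun _ => r).
Proof. by exists (Ecst r). Qed.

Lemma isE_u a j J : isE (fun p : jet R n => ju p a j J).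
Proof. by exists (Eu a j J). Qed.

Lemma isE_x (g : 'rV[R]_4 -> R) : smooth g -> isE (fun p : jet R n => g (jx p)).
Proof. by move=> sg; exists (Ex g). Qed.

Lemma isE_add f g : isE f -> isE g -> isE (fun p => f p + g p).
Proof.
move=> [e1 [w1 E1]] [e2 [w2 E2]]; exists (Eadd e1 e2); split => //= p.
by rewrite E1 E2.
Qed.

Lemma isE_mul f g : isE f -> isE g -> isE (fun p => f p * g p).
Proof.
move=> [e1 [w1 E1]] [e2 [w2 E2]]; exists (Emul e1 e2); split => //= p.
by rewrite E1 E2.
Qed.

Lemma isE_opp f : isE f -> isE (fun p => - f p).
Proof.
move=> [e1 [w1 E1]]; exists (Emul (Ecst (-1)) e1); split => //= p.
by rewrite E1 mulN1r.
Qed.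

Lemma isE_sub f g : isE f -> isE g -> isE (fun p => f p - g p).
Proof. by move=> Hf Hg; apply: isE_add => //; apply: isE_opp. Qed.

Lemma isE_ext f g : isE f -> (forall p, f p = g p) -> isE g.
Proof. by move=> [e [w E]] H; exists e; split => // p; rewrite E H. Qed.

Lemma isE_sum m (F : 'I_m -> dfun R n) :
  (forall k, isE (F k)) -> isE (fun p => \sum_(k < m) F k p).
Proof.
elim: m F => [|m IH] F HF.
  by apply: (isE_ext (isE_cst 0)) => p; rewrite big_ord0.
apply: (isE_ext (isE_add (IH (fun k => F (widen_ord (leqnSn m) k)) _) (HF ord_max))).
  by move=> k.
by move=> p; rewrite big_ord_recr.
Qed.

Lemma Dtot_add f g i p : isE f -> isE g ->
  Dtot i (fun q => f q + g q) p = Dtot i f p + Dtot i g p.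
Proof.
move=> Hf Hg; rewrite DtotE; apply: derive_val.
have H1 := isE_der i p Hf; have H2 := isE_der i p Hg.
set F1 := (fun t => f (line p i t)) in H1.
set F2 := (fun t => g (line p i t)) in H2.
have -> : (fun t => f (line p i t) + g (line p i t)) = (F1 + F2) :> (R -> R).
  by apply: funext.
exact: is_deriveD.
Qed.

Lemma Dtot_mul f g i p : isE f -> isE g ->
  Dtot i (fun q => f q * g q) p = Dtot i f p * g p + f p * Dtot i g p.
Proof.
move=> Hf Hg; rewrite DtotE; apply: derive_val.
have H1 := isE_der i p Hf; have H2 := isE_der i p Hg.
set F1 := (fun t => f (line p i t)) in H1.
set F2 := (fun t => g (line p i t)) in H2.
have -> : (fun t => f (line p i t) * g (line p i t)) = (F1 * F2) :> (R -> R).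
  by apply: funext.
apply: is_derive_eq; rewrite /F1 /F2 /= !line0.
by rewrite addrC -[_ *: _]/(_ * _) -[X in _ + X]/(_ * _) [X in X + _]mulrC.
Qed.

Lemma Dtot_cst (r : R) i (p : jet R n) : Dtot i (fun _ : jet R n => r) p = 0.
Proof. by rewrite (Dtot_eval (e:=Ecst r)). Qed.

Lemma Dtot_u a j J i (p : jet R n) : Dtot i (fun q => ju q a j J) p = ju p a j (i :: J).
Proof. by rewrite (Dtot_eval (e:=Eu a j J)). Qed.

Lemma Dtot_x (g : 'rV[R]_4 -> R) i (p : jet R n) : smooth g ->
  Dtot i (fun q => g (jx q)) p = partial i g (jx p).
Proof. by move=> sg; rewrite (Dtot_eval (e:=Ex g)). Qed.

Lemma Dtot_opp f i p : isE f -> Dtot i (fun q => - f q) p = - Dtot i f p.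
Proof.
move=> Hf.
have -> : (fun q => - f q) = (fun q => (fun _ => -1) q * f q).
  by apply: funext => q; rewrite mulN1r.
by rewrite Dtot_mul ?Dtot_cst ?mul0r ?add0r ?mulN1r //; apply: isE_cst.
Qed.

Lemma Dtot_sub f g i p : isE f -> isE g ->
  Dtot i (fun q => f q - g q) p = Dtot i f p - Dtot i g p.
Proof.
by move=> Hf Hg; rewrite Dtot_add ?Dtot_opp //; apply: isE_opp.
Qed.

Lemma Dtot_sum m (F : 'I_m -> dfun R n) i p : (forall k, isE (F k)) ->
  Dtot i (fun q => \sum_(k < m) F k q) p = \sum_(k < m) Dtot i (F k) p.
Proof.
elim: m F => [|m IH] F HF.
  have -> : (fun q => \sum_(k < 0) F k q) = (fun _ => 0).
    by apply: funext => q; rewrite big_ord0.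
  by rewrite Dtot_cst big_ord0.
have -> : (fun q => \sum_(k < m.+1) F k q) =
   (fun q => (fun q => \sum_(k < m) F (widen_ord (leqnSn m) k) q) q + F ord_max q).
  by apply: funext => q; rewrite big_ord_recr.
rewrite Dtot_add //; last by apply: isE_sum => k.
by rewrite IH // big_ord_recr.
Qed.

Lemma Dtot_scal r f i p : isE f -> Dtot i (fun q => r * f q) p = r * Dtot i f p.
Proof.
move=> Hf; rewrite (Dtot_mul (f:=fun _ => r)) ?Dtot_cst ?mul0r ?add0r //.
exact: isE_cst.
Qed.

Lemma Dtot_xmul (g : 'rV[R]_4 -> R) f i p : smooth g -> isE f ->
  Dtot i (fun q => g (jx q) * f q) p = partial i g (jx p) * f p + g (jx p) * Dtot i f p.
Proof.
move=> sg Hf; rewrite (Dtot_mul (f:=fun q => g (jx q))) ?Dtot_x //.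
exact: isE_x.
Qed.

Lemma sym_line p i t : sym_jet p -> sym_jet (line p i t).
Proof.
move=> sp a j J J' pJ /=.
by rewrite (sp a j J J' pJ) (sp a j (i :: J) (i :: J')) // perm_cons.
Qed.

Lemma Dtot_sym (f g : dfun R n) i p : (forall q, sym_jet q -> f q = g q) -> sym_jet p ->
  Dtot i f p = Dtot i g p.
Proof.
move=> H sp; rewrite /Dtot.
have -> // : (fun t => f (line p i t)) = (fun t => g (line p i t)).
apply: funext => t; apply: H; exact: sym_line.
Qed.


Lemma deriv_comm e i j p : wf e -> sym_jet p ->
  eval (deriv i (deriv j e)) p = eval (deriv j (deriv i e)) p.
Proof.
move=> w sp; elim: e w => [r|a k J|g|e1 IH1 e2 IH2|e1 IH1 e2 IH2] w;
  cbn [eval deriv wf] in w |- *.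
- by [].
- apply: sp.
  by rewrite -[i :: j :: J]/([:: i] ++ [:: j] ++ J) -[j :: i :: J]/([:: j] ++ [:: i] ++ J) perm_catCA.
- by apply: schwarz.
- by case: w => w1 w2; rewrite IH1 // IH2.
- case: w => w1 w2; rewrite IH1 // IH2 //.
  by rewrite -!addrA; congr (_ + _); rewrite !addrA; congr (_ + _); rewrite addrC.
Qed.

Lemma Dtot_comm f i j p : isE f -> sym_jet p ->
  Dtot i (Dtot j f) p = Dtot j (Dtot i f) p.
Proof.
move=> /isE_eq [e [w ->]] sp.
have Ej : Dtot j (eval e) = eval (deriv j e).
  by apply: funext => q; rewrite Dtot_eval.
have Ei : Dtot i (eval e) = eval (deriv i e).
  by apply: funext => q; rewrite Dtot_eval.
rewrite Ej Ei (Dtot_eval (e:=deriv j e)) ?(Dtot_eval (e:=deriv i e));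
  try exact: wf_deriv.
exact: deriv_comm.
Qed.

End PB.

Section PC.
Variables (R : realType) (n : nat) (c : 'I_n -> 'I_n -> 'I_n -> R).
Hypothesis Hlie : lie_structure c.

Lemma cA a b g : c a b g = - c a g b.
Proof. by case: Hlie. Qed.

Definition commX (X : 'I_n -> 'I_n -> 'rV[R]_4 -> R) :=
  forall a g d x, \sum_(b < n) (X a b x * c b g d + c a b g * X b d x) = 0.

Lemma commX_br X (x : 'rV[R]_4) (u v : 'I_n -> R) a : commX X ->
  \sum_(b < n) \sum_(g < n) c a b g * u b * (\sum_(d < n) X g d x * v d)
  = \sum_(b < n) X a b x * (\sum_(d < n) \sum_(e < n) c b d e * u d * v e).
Proof.
move=> HX.
have E1 : \sum_(b < n) \sum_(g < n) c a b g * u b * (\sum_(d < n) X g d x * v d)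
   = \sum_(b < n) \sum_(d < n) u b * v d * (\sum_(g < n) c a b g * X g d x).
  apply: eq_bigr => b _.
  under eq_bigr do rewrite big_distrr /=.
  rewrite exchange_big /=; apply: eq_bigr => d _.
  rewrite big_distrr /=; apply: eq_bigr => g _; ring.
have E2 : \sum_(b < n) X a b x * (\sum_(d < n) \sum_(e < n) c b d e * u d * v e)
   = \sum_(d < n) \sum_(e < n) u d * v e * (\sum_(b < n) X a b x * c b d e).
  under eq_bigr do rewrite big_distrr /=.
  rewrite exchange_big /=; apply: eq_bigr => d _.
  under eq_bigr do rewrite big_distrr /=.
  rewrite exchange_big /=; apply: eq_bigr => e _.
  rewrite big_distrr /=; apply: eq_bigr => b _; ring.
rewrite E1 E2; apply: eq_bigr => b _; apply: eq_bigr => d _; congr (_ * _).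
have := HX a b d x.
under eq_bigr do rewrite (cA a _ b) mulNr.
rewrite big_split /= sumrN => /eqP; rewrite subr_eq0 => /eqP ->.
by [].
Qed.


Definition isG (G : gfun R n) := forall a, isE (G a).

Definition act (X : 'I_n -> 'I_n -> 'rV[R]_4 -> R) (G : gfun R n) : gfun R n :=
  fun a p => \sum_(b < n) X a b (jx p) * G b p.

Definition smX (X : 'I_n -> 'I_n -> 'rV[R]_4 -> R) := forall a b, smooth (X a b).

Definition pX (l : 'I_4) (X : 'I_n -> 'I_n -> 'rV[R]_4 -> R) :=
  fun a b => partial l (X a b).

Lemma isG_Fld i j : isG (Fld c i j).
Proof.
move=> a; rewrite /Fld.
apply: isE_add; first by apply: isE_sub; apply: isE_u.
apply: isE_sum => b; apply: isE_sum => g.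
by apply: isE_mul; [apply: isE_mul; [apply: isE_cst|apply: isE_u]|apply: isE_u].
Qed.

Lemma isG_nabla l G : isG G -> isG (nabla c l G).
Proof.
move=> HG a; rewrite /nabla.
apply: isE_add; first exact: isE_Dtot.
apply: isE_sum => b; apply: isE_sum => g.
by apply: isE_mul; [apply: isE_mul; [apply: isE_cst|apply: isE_u]|apply: HG].
Qed.

Lemma isG_act X G : smX X -> isG G -> isG (act X G).
Proof.
move=> sX HG a; apply: isE_sum => b; apply: isE_mul => //.
exact: isE_x.
Qed.

Lemma smX_pX l X : smX X -> smX (pX l X).
Proof. by move=> sX a b; apply: smooth_partial. Qed.

Lemma nabla_sum m (G : 'I_m -> gfun R n) l a p : (forall k, isG (G k)) ->
  nabla c l (fun a q => \sum_(k < m) G k a q) a p = \sum_(k < m) nabla c l (G k) a p.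
Proof.
move=> HG; rewrite /nabla Dtot_sum; last by move=> k; apply: HG.
rewrite big_split /=; congr (_ + _).
under eq_bigr do (under eq_bigr do rewrite big_distrr /=).
under eq_bigr do rewrite exchange_big /=.
rewrite exchange_big /=; apply: eq_bigr => k _.
by rewrite exchange_big.
Qed.

Lemma nabla_add (G H : gfun R n) l a p : isG G -> isG H ->
  nabla c l (fun a q => G a q + H a q) a p = nabla c l G a p + nabla c l H a p.
Proof.
move=> HG HH; rewrite /nabla Dtot_add //.
rewrite -!addrA; congr (_ + _); rewrite addrCA; congr (_ + _).
rewrite -big_split /=; apply: eq_bigr => b _.
rewrite -big_split /=; apply: eq_bigr => g _; ring.
Qed.

Lemma nabla_scal (r : R) (G : gfun R n) l a p : isG G ->
  nabla c l (fun a q => r * G a q) a p = r * nabla c l G a p.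
Proof.
move=> HG; rewrite /nabla Dtot_scal // mulrDr; congr (_ + _).
rewrite big_distrr /=; apply: eq_bigr => b _.
rewrite big_distrr /=; apply: eq_bigr => g _; ring.
Qed.

Lemma commX_pX l X : smX X -> commX X -> commX (pX l X).
Proof.
move=> sX HX a g d x; rewrite /pX.
have E := partial_ext l x (fun y => HX a g d y).
rewrite partial_cst in E; rewrite -[X in _ = X]E.
rewrite partial_sum.
  apply: eq_bigr => b _.
  rewrite [RHS](partial_ext l x (g := fun y => c b g d * X a b y + c a b g * X b d y)).
    rewrite partial_lin; try exact: smooth_diff.
    by rewrite [X in _ = X + _]mulrC.
  by move=> y; rewrite mulrC.
move=> b.
have -> : (fun y => X a b y * c b g d + c a b g * X b d y)
        = (fun y => c b g d * X a b y + c a b g * X b d y).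
  by apply: funext => y; rewrite mulrC.
have d1 : derivable (X a b) x (delta_mx 0 l).
  by apply: diff_derivable; apply: smooth_diff.
have d2 : derivable (X b d) x (delta_mx 0 l).
  by apply: diff_derivable; apply: smooth_diff.
by case: (derivable_lin (c b g d) (c a b g) d1 d2).
Qed.

Lemma nabla_act X G l a p : smX X -> commX X -> isG G ->
  nabla c l (act X G) a p = act (pX l X) G a p + act X (nabla c l G) a p.
Proof.
move=> sX HX HG; rewrite /nabla /act.
rewrite Dtot_sum; last by move=> b; apply: isE_mul => //; apply: isE_x.
under eq_bigr do rewrite Dtot_xmul //.
rewrite big_split /= -addrA; congr (_ + _).
under [X in _ = X]eq_bigr do rewrite mulrDr.
rewrite big_split /=; congr (_ + _).
exact: commX_br.
Qed.

End PC.

Section PD.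
Variables (R : realType) (n : nat) (c : 'I_n -> 'I_n -> 'I_n -> R).
Hypothesis Hlie : lie_structure c.

Lemma jacobi a b g d :
  \sum_(e < n) (c a b e * c e g d + c a g e * c e d b + c a d e * c e b g) = 0.
Proof. by case: Hlie => _ ->. Qed.

Lemma sum_pair (A B : 'I_n -> R) a :
  \sum_(b < n) \sum_(g < n) c a b g * (A b * B g + B b * A g) = 0.
Proof.
have E : \sum_(b < n) \sum_(g < n) c a b g * (B b * A g)
       = - \sum_(b < n) \sum_(g < n) c a b g * (A b * B g).
  rewrite exchange_big /= -sumrN; apply: eq_bigr => b _.
  rewrite -sumrN; apply: eq_bigr => g _; rewrite (cA Hlie a g b); ring.
have -> : \sum_(b < n) \sum_(g < n) c a b g * (A b * B g + B b * A g)
  = \sum_(b < n) \sum_(g < n) c a b g * (A b * B g) + \sum_(b < n) \sum_(g < n) c a b g * (B b * A g).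
  rewrite -big_split /=; apply: eq_bigr => b _; rewrite -big_split /=.
  by apply: eq_bigr => g _; rewrite mulrDr.
by rewrite E subrr.
Qed.


Definition U (p : jet R n) b i := ju p b i [::].
Definition V (p : jet R n) b i j := ju p b i [:: j].

Lemma DF m j k a p : Dtot m (Fld c j k a) p =
  ju p a k [:: m; j] - ju p a j [:: m; k]
  + \sum_(b < n) \sum_(g < n) c a b g * (V p b j m * U p g k + U p b j * V p g k m).
Proof.
rewrite /Fld Dtot_add; first last.
- by apply: isE_sum => b; apply: isE_sum => g;
    apply: isE_mul; [apply: isE_mul; [apply: isE_cst|apply: isE_u]|apply: isE_u].
- by apply: isE_sub; apply: isE_u.
rewrite Dtot_sub ?Dtot_u; try exact: isE_u.
congr (_ + _).
rewrite Dtot_sum; last first.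
  by move=> b; apply: isE_sum => g;
    apply: isE_mul; [apply: isE_mul; [apply: isE_cst|apply: isE_u]|apply: isE_u].
apply: eq_bigr => b _.
rewrite Dtot_sum; last first.
  by move=> g; apply: isE_mul; [apply: isE_mul; [apply: isE_cst|apply: isE_u]|apply: isE_u].
apply: eq_bigr => g _.
rewrite Dtot_mul; first last.
- exact: isE_u.
- by apply: isE_mul; [apply: isE_cst|apply: isE_u].
rewrite Dtot_scal ?Dtot_u; last exact: isE_u.
rewrite /U /V; ring.
Qed.


Definition cub p a m j k := \sum_(b < n) \sum_(g < n) c a b g * U p b m *
   (\sum_(d < n) \sum_(e < n) c g d e * U p d j * U p e k).

Definition qq p b g m j k := V p b j m * U p g k + U p b j * V p g k m
   + U p b m * (V p g k j - V p g j k).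

Lemma nablaF_expl m j k a p : nabla c m (Fld c j k) a p =
  (ju p a k [:: m; j] - ju p a j [:: m; k])
  + \sum_(b < n) \sum_(g < n) c a b g * qq p b g m j k + cub p a m j k.
Proof.
rewrite /nabla DF -!addrA; congr (_ + _); congr (_ + _).
have -> : \sum_(b < n) \sum_(g < n) c a b g * ju p b m [::] * Fld c j k g p
  = \sum_(b < n) \sum_(g < n) c a b g * U p b m * (V p g k j - V p g j k) + cub p a m j k.
  rewrite /cub -big_split /=; apply: eq_bigr => b _.
  rewrite -big_split /=; apply: eq_bigr => g _.
  by rewrite /Fld /U /V -mulrDr.
rewrite addrA; congr (_ + _).
rewrite -big_split /=; apply: eq_bigr => b _.
rewrite -big_split /=; apply: eq_bigr => g _.
rewrite /qq; ring.
Qed.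

Lemma sum3_rot (F : 'I_n -> 'I_n -> 'I_n -> R) :
  \sum_(b < n) \sum_(d < n) \sum_(e < n) F b d e
  = \sum_(e < n) \sum_(b < n) \sum_(d < n) F b d e.
Proof. by under eq_bigr do rewrite exchange_big; rewrite exchange_big. Qed.

Definition JJ a b d e := \sum_(g < n) c a b g * c g d e.

Lemma cub_norm p a m j k : cub p a m j k =
  \sum_(b < n) \sum_(d < n) \sum_(e < n) U p b m * U p d j * U p e k * JJ a b d e.
Proof.
rewrite /cub; apply: eq_bigr => b _.
have -> : \sum_(g < n) c a b g * U p b m * (\sum_(d < n) \sum_(e < n) c g d e * U p d j * U p e k)
  = \sum_(g < n) \sum_(d < n) \sum_(e < n) c a b g * U p b m * (c g d e * U p d j * U p e k).
  apply: eq_bigr => g _; rewrite big_distrr /=; apply: eq_bigr => d _.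
  by rewrite big_distrr.
rewrite exchange_big /=; apply: eq_bigr => d _.
rewrite exchange_big /=; apply: eq_bigr => e _.
rewrite /JJ big_distrr /=; apply: eq_bigr => g _; ring.
Qed.

Lemma cub_cyc p a m j k : cub p a m j k + cub p a j k m + cub p a k m j = 0.
Proof.
rewrite !cub_norm.
rewrite [X in _ + X + _]sum3_rot [X in _ + X]sum3_rot [X in _ + X]sum3_rot.
rewrite -!big_split /=.
rewrite big1 // => b _; rewrite -!big_split /= big1 // => d _.
rewrite -!big_split /= big1 // => e _.
have -> : U p b m * U p d j * U p e k * JJ a b d e + U p d j * U p e k * U p b m * JJ a d e b +
   U p e k * U p b m * U p d j * JJ a e b d
   = U p b m * U p d j * U p e k * (JJ a b d e + JJ a d e b + JJ a e b d) by ring.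
by rewrite /JJ -!big_split /= jacobi mulr0.
Qed.


Lemma sym2 (p : jet R n) a k i j : sym_jet p -> ju p a k [:: i; j] = ju p a k [:: j; i].
Proof.
move=> sp; apply: sp.
by rewrite -[[:: i; j]]/([:: i] ++ [:: j] ++ [::]) -[[:: j; i]]/([:: j] ++ [:: i] ++ [::]) perm_catCA.
Qed.

Lemma bianchi m j k a p : sym_jet p ->
  nabla c m (Fld c j k) a p + nabla c j (Fld c k m) a p + nabla c k (Fld c m j) a p = 0.
Proof.
move=> sp; rewrite !nablaF_expl.
rewrite (sym2 a k j m sp) (sym2 a m k j sp) (sym2 a j m k sp).
have Eq : \sum_(b < n) \sum_(g < n) c a b g * qq p b g m j k
   + \sum_(b < n) \sum_(g < n) c a b g * qq p b g j k m
   + \sum_(b < n) \sum_(g < n) c a b g * qq p b g k m j = 0.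
  have -> : \sum_(b < n) \sum_(g < n) c a b g * qq p b g m j k
   + \sum_(b < n) \sum_(g < n) c a b g * qq p b g j k m
   + \sum_(b < n) \sum_(g < n) c a b g * qq p b g k m j
   = \sum_(b < n) \sum_(g < n) c a b g * (V p b j m * U p g k + U p b k * V p g j m)
   + \sum_(b < n) \sum_(g < n) c a b g * (V p b k j * U p g m + U p b m * V p g k j)
   + \sum_(b < n) \sum_(g < n) c a b g * (V p b m k * U p g j + U p b j * V p g m k).
    rewrite -!big_split /=; apply: eq_bigr => b _.
    rewrite -!big_split /=; apply: eq_bigr => g _.
    rewrite /qq; ring.
  by rewrite !sum_pair !addr0.
have Ec := cub_cyc p a m j k.
move: Eq Ec.
set S1 := \sum_(b < n) \sum_(g < n) c a b g * qq p b g m j k.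
set S2 := \sum_(b < n) \sum_(g < n) c a b g * qq p b g j k m.
set S3 := \sum_(b < n) \sum_(g < n) c a b g * qq p b g k m j.
set C1 := cub p a m j k; set C2 := cub p a j k m; set C3 := cub p a k m j.
move=> Eq Ec.
have -> : ju p a k [:: m; j] - ju p a j [:: k; m] + S1 + C1 +
  (ju p a m [:: j; k] - ju p a k [:: m; j] + S2 + C2) +
  (ju p a j [:: k; m] - ju p a m [:: j; k] + S3 + C3)
  = (S1 + S2 + S3) + (C1 + C2 + C3) by ring.
by rewrite Eq Ec addr0.
Qed.


Lemma Fld_anti k j a (q : jet R n) : Fld c k j a q = - Fld c j k a q.
Proof.
rewrite /Fld.
have -> : \sum_(b < n) \sum_(g < n) c a b g * ju q b k [::] * ju q g j [::]
  = - \sum_(b < n) \sum_(g < n) c a b g * ju q b j [::] * ju q g k [::].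
  rewrite exchange_big /= -sumrN; apply: eq_bigr => g _.
  rewrite -sumrN; apply: eq_bigr => b _; rewrite (cA Hlie a g b); ring.
ring.
Qed.

Lemma nablaF_anti l k j a p :
  nabla c l (Fld c k j) a p = - nabla c l (Fld c j k) a p.
Proof.
have -> : Fld c k j = (fun a q => (-1) * Fld c j k a q).
  by apply: funext => b; apply: funext => q; rewrite Fld_anti mulN1r.
by rewrite nabla_scal ?mulN1r //; apply: isG_Fld.
Qed.

Definition cubG a (A B C : 'I_n -> R) := \sum_(b < n) \sum_(g < n) c a b g * A b *
   (\sum_(d < n) \sum_(e < n) c g d e * B d * C e).

Lemma cubG_norm a A B C : cubG a A B C =
  \sum_(b < n) \sum_(d < n) \sum_(e < n) A b * B d * C e * JJ a b d e.
Proof.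
rewrite /cubG; apply: eq_bigr => b _.
have -> : \sum_(g < n) c a b g * A b * (\sum_(d < n) \sum_(e < n) c g d e * B d * C e)
  = \sum_(g < n) \sum_(d < n) \sum_(e < n) c a b g * A b * (c g d e * B d * C e).
  apply: eq_bigr => g _; rewrite big_distrr /=; apply: eq_bigr => d _.
  by rewrite big_distrr.
rewrite exchange_big /=; apply: eq_bigr => d _.
rewrite exchange_big /=; apply: eq_bigr => e _.
rewrite /JJ big_distrr /=; apply: eq_bigr => g _; ring.
Qed.

Lemma NN_expl l m (G : gfun R n) a p : isG G ->
  nabla c l (nabla c m G) a p = Dtot l (Dtot m (G a)) p
  + \sum_(b < n) \sum_(g < n) c a b g * (V p b m l * G g p + U p b m * Dtot l (G g) p
       + U p b l * Dtot m (G g) p)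
  + cubG a (fun b => U p b l) (fun d => U p d m) (fun e => G e p).
Proof.
move=> HG.
have iE : forall b g, isE (fun q : jet R n => c a b g * ju q b m [::] * G g q).
  by move=> b g; apply: isE_mul; [apply: isE_mul; [apply: isE_cst|apply: isE_u]|apply: HG].
rewrite {1}/nabla.
rewrite (_ : Dtot l (nabla c m G a) p = Dtot l (Dtot m (G a)) p
   + \sum_(b < n) \sum_(g < n) c a b g * (V p b m l * G g p + U p b m * Dtot l (G g) p)); last first.
  rewrite /nabla Dtot_add; first last.
  - by apply: isE_sum => b; apply: isE_sum => g; apply: iE.
  - by apply: isE_Dtot.
  congr (_ + _).
  rewrite Dtot_sum; last by move=> b; apply: isE_sum => g; apply: iE.
  apply: eq_bigr => b _.
  rewrite Dtot_sum; last by move=> g; apply: iE.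
  apply: eq_bigr => g _.
  rewrite Dtot_mul; first last.
  - exact: HG.
  - by apply: isE_mul; [apply: isE_cst|apply: isE_u].
  rewrite Dtot_scal ?Dtot_u; last exact: isE_u.
  rewrite /U /V; ring.
have E1 : \sum_(b < n) \sum_(g < n) c a b g * ju p b l [::] * nabla c m G g p
  = \sum_(b < n) \sum_(g < n) c a b g * (U p b l * Dtot m (G g) p)
    + cubG a (fun b => U p b l) (fun d => U p d m) (fun e => G e p).
  rewrite /cubG -big_split /=; apply: eq_bigr => b _.
  rewrite -big_split /=; apply: eq_bigr => g _.
  rewrite /nabla /U; ring.
have E2 : \sum_(b < n) \sum_(g < n) c a b g * (V p b m l * G g p + U p b m * Dtot l (G g) p
       + U p b l * Dtot m (G g) p)
  = \sum_(b < n) \sum_(g < n) c a b g * (V p b m l * G g p + U p b m * Dtot l (G g) p)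
  + \sum_(b < n) \sum_(g < n) c a b g * (U p b l * Dtot m (G g) p).
  rewrite -big_split /=; apply: eq_bigr => b _.
  rewrite -big_split /=; apply: eq_bigr => g _; ring.
rewrite E1 E2; ring.
Qed.



Lemma cubic_ricci a (A B C : 'I_n -> R) :
  cubG a A B C - cubG a B A C =
  \sum_(b < n) \sum_(g < n) c a b g * (\sum_(d < n) \sum_(e < n) c b d e * A d * B e) * C g.
Proof.
have ER : \sum_(b < n) \sum_(g < n) c a b g * (\sum_(d < n) \sum_(e < n) c b d e * A d * B e) * C g
  = \sum_(d < n) \sum_(e < n) \sum_(g < n) A d * B e * C g * (\sum_(b < n) c a b g * c b d e).
  have -> : \sum_(b < n) \sum_(g < n) c a b g * (\sum_(d < n) \sum_(e < n) c b d e * A d * B e) * C g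
     = \sum_(b < n) \sum_(g < n) \sum_(d < n) \sum_(e < n) c a b g * (c b d e * A d * B e) * C g.
    apply: eq_bigr => b _; apply: eq_bigr => g _.
    rewrite big_distrr big_distrl /=; apply: eq_bigr => d _.
    by rewrite big_distrr big_distrl.
  rewrite exchange_big /=.
  under eq_bigr do rewrite sum3_rot sum3_rot.
  rewrite sum3_rot sum3_rot; apply: eq_bigr => d _; apply: eq_bigr => e _.
  apply: eq_bigr => g _; rewrite big_distrr /=; apply: eq_bigr => b _; ring.
rewrite ER !cubG_norm [X in _ - X]exchange_big /= -sumrB; apply: eq_bigr => d _.
rewrite -sumrB; apply: eq_bigr => e _; rewrite -sumrB; apply: eq_bigr => g _.
suff : JJ a d e g - JJ a e d g - \sum_(b < n) c a b g * c b d e = 0.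
  by move/eqP; rewrite !subr_eq0 => /eqP E0; rewrite -E0; ring.
have E1 : JJ a e d g = - \sum_(b < n) c a e b * c b g d.
  rewrite /JJ -sumrN; apply: eq_bigr => b _; rewrite (cA Hlie b d g); ring.
have E2 : \sum_(b < n) c a b g * c b d e = - \sum_(b < n) c a g b * c b d e.
  rewrite -sumrN; apply: eq_bigr => b _; rewrite (cA Hlie a b g); ring.
rewrite E1 E2 !opprK /JJ -!big_split /=.
exact: jacobi.
Qed.

Lemma ricci l m (G : gfun R n) a p : isG G -> sym_jet p ->
  nabla c l (nabla c m G) a p - nabla c m (nabla c l G) a p
  = \sum_(b < n) \sum_(g < n) c a b g * Fld c l m b p * G g p.
Proof.
move=> HG sp; rewrite !NN_expl // (Dtot_comm l m (HG a) sp).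
have EF : \sum_(b < n) \sum_(g < n) c a b g * Fld c l m b p * G g p
  = \sum_(b < n) \sum_(g < n) c a b g * ((V p b m l - V p b l m) * G g p)
  + \sum_(b < n) \sum_(g < n) c a b g *
      (\sum_(d < n) \sum_(e < n) c b d e * U p d l * U p e m) * G g p.
  rewrite -big_split /=; apply: eq_bigr => b _.
  rewrite -big_split /=; apply: eq_bigr => g _.
  rewrite /Fld /U /V; ring.
rewrite EF -cubic_ricci.
have EM : \sum_(b < n) \sum_(g < n) c a b g * (V p b m l * G g p + U p b m * Dtot l (G g) p
       + U p b l * Dtot m (G g) p)
  - \sum_(b < n) \sum_(g < n) c a b g * (V p b l m * G g p + U p b l * Dtot m (G g) p
       + U p b m * Dtot l (G g) p)
  = \sum_(b < n) \sum_(g < n) c a b g * ((V p b m l - V p b l m) * G g p).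
  rewrite -sumrB; apply: eq_bigr => b _; rewrite -sumrB; apply: eq_bigr => g _; ring.
rewrite -EM; ring.
Qed.

End PD.

Section PE.
Variable R : realType.
Local Notation eta := (mink R).

Lemma mink_sq j : eta j j * eta j j = 1.
Proof. rewrite /mink eqxx; case: ifP => _; [rewrite mulN1r opprK|rewrite mulr1]; done. Qed.

Lemma mink_off j k : j != k -> eta j k = 0.
Proof. by rewrite /mink => /negbTE ->. Qed.

Lemma mink_neq0 j : eta j j != 0.
Proof. rewrite /mink eqxx; case: ifP => _; [rewrite oppr_eq0|]; exact: oner_neq0. Qed.

Lemma sum_mink (f : 'I_4 -> R) j : \sum_(k < 4) eta j k * f k = eta j j * f j.
Proof.
rewrite (bigD1 j) //= big1 ?addr0 // => k nkj.
by rewrite mink_off ?mul0r // eq_sym.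
Qed.

Lemma T1_scalar (Y : 'I_4 -> 'I_4 -> R) (ka : R) (N : 'I_4 -> 'I_4 -> 'I_4 -> R) i :
  (forall m k, (eta m m * Y m k + eta k k * Y k m) / 2 = eta m k * ka) ->
  (forall m j k, N m k j = - N m j k) ->
  (forall m j k, N m j k + N j k m + N k m j = 0) ->
  (forall k, \sum_(j < 4) eta j j * N j k j = 0) ->
  \sum_(j < 4) \sum_(k < 4) eta j j * (Y i k * N j j k + Y j k * N i j k
      - 2 * (Y j k * N j i k)) = 0.
Proof.
move=> CK NA NB YM.
pose Yh j k := eta j j * Y j k.
have CK' : forall j k, Yh k j = 2 * eta j k * ka - Yh j k.
  move=> j k; have := CK k j; rewrite /Yh => E.
  have -> : eta j k = eta k j by rewrite /mink eq_sym; case: eqP => // ->.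
  by rewrite -mulrA -E; field; rewrite ?pnatr_eq0.
have NJ : forall j k, N j i k = N i j k + N k i j.
  move=> j k; have := NB j i k; rewrite (NA i j k) (NA k i j) => E.
  by apply/eqP; rewrite -subr_eq0 -E; apply/eqP; ring.
have PA : \sum_(j < 4) \sum_(k < 4) eta j j * (Y i k * N j j k) = 0.
  rewrite exchange_big /= big1 // => k _.
  have -> : \sum_(j < 4) eta j j * (Y i k * N j j k) = - Y i k * \sum_(j < 4) eta j j * N j k j.
    rewrite big_distrr /=; apply: eq_bigr => j _; rewrite (NA j k j); ring.
  by rewrite YM mulr0.
pose T := \sum_(j < 4) \sum_(k < 4) Yh j k * N i j k.
pose S := \sum_(j < 4) \sum_(k < 4) Yh j k * N k i j.
have PB : \sum_(j < 4) \sum_(k < 4) (Yh j k * N i j k - 2 * (Yh j k * N j i k)) = - T - 2 * S.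
  rewrite /T /S mulr_sumr -sumrN -sumrB; apply: eq_bigr => j _.
  rewrite mulr_sumr -sumrN -sumrB; apply: eq_bigr => k _.
  rewrite NJ; ring.
have SS : S = - T - S.
  rewrite {1}/S exchange_big /=.
  have -> : \sum_(j < 4) \sum_(k < 4) Yh k j * N j i k
     = \sum_(j < 4) \sum_(k < 4) eta j k * (2 * ka * N j i k)
       - \sum_(j < 4) \sum_(k < 4) (Yh j k * N i j k + Yh j k * N k i j).
    rewrite -sumrB; apply: eq_bigr => j _; rewrite -sumrB; apply: eq_bigr => k _.
    rewrite CK' NJ; ring.
  have -> : \sum_(j < 4) \sum_(k < 4) eta j k * (2 * ka * N j i k) = 0.
    under eq_bigr do rewrite sum_mink.
    have -> : \sum_(j < 4) eta j j * (2 * ka * N j i j) = 2 * ka * \sum_(j < 4) eta j j * N j i j.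
      by rewrite big_distrr /=; apply: eq_bigr => j _; ring.
    by rewrite YM mulr0.
  rewrite sub0r /T /S -opprD; congr (- _); rewrite -big_split /=.
  by apply: eq_bigr => j _; rewrite -big_split.
have S2 : 2 * S = - T.
  by rewrite -(subrK S (- T)) -SS; ring.
have -> : \sum_(j < 4) \sum_(k < 4) eta j j * (Y i k * N j j k + Y j k * N i j k
      - 2 * (Y j k * N j i k))
  = \sum_(j < 4) \sum_(k < 4) eta j j * (Y i k * N j j k)
    + \sum_(j < 4) \sum_(k < 4) (Yh j k * N i j k - 2 * (Yh j k * N j i k)).
  rewrite -big_split /=; apply: eq_bigr => j _; rewrite -big_split /=.
  apply: eq_bigr => k _; rewrite /Yh; ring.
rewrite PA PB S2; ring.
Qed.


Lemma w_formula (w : 'I_4 -> 'I_4 -> 'I_4 -> R) (K : 'I_4 -> R) :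
  (forall m a b, w m a b = w a m b) ->
  (forall m a, w m a a = K m) ->
  (forall m a b, a != b -> eta a a * w m a b + eta b b * w m b a = 0) ->
  forall m a b, w m a b = eta b b * (eta a b * K m + eta m b * K a - eta m a * K b).
Proof.
move=> S D O.
pose L m a b := eta b b * w m a b.
have C : forall m a b, L m a b + L m b a = 2 * eta a b * K m.
  move=> m a b; rewrite /L; case: (eqVneq a b) => [->|nab].
    by rewrite D; ring.
  rewrite (mink_off nab) mulr0 mul0r.
  have -> : eta b b * w m a b + eta a a * w m b a
     = eta a a * eta b b * (eta a a * w m a b + eta b b * w m b a)
       + (1 - eta a a * eta a a) * (eta b b * w m a b)
       + (1 - eta b b * eta b b) * (eta a a * w m b a) by ring.
  by rewrite O // !mink_sq !subrr; ring.
move=> m a b.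
have E2 : 2 * L m a b = (L m a b + L m b a) + (L a m b + L a b m) - (L b m a + L b a m).
  by rewrite /L (S a m b) (S a b m) (S m b a); ring.
rewrite !C in E2.
have EL : L m a b = eta a b * K m + eta m b * K a - eta m a * K b.
  have h2 : (2 : R) != 0 by rewrite pnatr_eq0.
  apply: (mulfI h2); rewrite E2; ring.
rewrite -EL /L mulrA mink_sq mul1r //.
Qed.

Definition o0 : 'I_4 := @Ordinal 4 0 isT.
Definition o1 : 'I_4 := @Ordinal 4 1 isT.
Definition o2 : 'I_4 := @Ordinal 4 2 isT.
Definition o3 : 'I_4 := @Ordinal 4 3 isT.

Lemma sum4 (f : 'I_4 -> R) : \sum_(k < 4) f k = f o0 + f o1 + f o2 + f o3.
Proof.
rewrite !big_ord_recl big_ord0 addr0 !addrA.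
by congr (_ + _ + _ + _); congr f; apply: val_inj.
Qed.

Lemma T2_scalar (w : 'I_4 -> 'I_4 -> 'I_4 -> R) (K : 'I_4 -> R) (F : 'I_4 -> 'I_4 -> R) i :
  (forall m a b, w m a b = w a m b) ->
  (forall m a, w m a a = K m) ->
  (forall m a b, a != b -> eta a a * w m a b + eta b b * w m b a = 0) ->
  (forall j k, F k j = - F j k) ->
  \sum_(j < 4) \sum_(k < 4) eta j j * (w j i k * F j k - w j j k * F i k) = 0.
Proof.
move=> S D O A.
have Wf := w_formula S D O.
have Fd : forall j, F j j = 0.
  move=> j; have := A j j => /eqP; rewrite -subr_eq0 opprK -mulr2n -mulr_natl.
  by rewrite mulf_eq0 pnatr_eq0 /= => /eqP.
under eq_bigr do (under eq_bigr do rewrite !Wf).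
have Ei : i = o0 \/ i = o1 \/ i = o2 \/ i = o3.
  case: i => [[|[|[|[|i]]]] Hi]; last by [].
  - by left; apply: val_inj.
  - by right; left; apply: val_inj.
  - by right; right; left; apply: val_inj.
  - by right; right; right; apply: val_inj.
rewrite !sum4 /mink /=.
rewrite (A o0 o1) (A o0 o2) (A o0 o3) (A o1 o2) (A o1 o3) (A o2 o3) !Fd.
case: Ei => [->|[->|[->|->]]] /=; rewrite ?(A o0 o1) ?(A o0 o2) ?(A o0 o3) ?(A o1 o2) ?(A o1 o3) ?(A o2 o3) ?Fd; ring.
Qed.

End PE.

Section PG.
Variables (R : realType) (n : nat) (c : 'I_n -> 'I_n -> 'I_n -> R).
Variable xi : 'I_n -> 'I_n -> 'I_4 -> 'rV[R]_4 -> R.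
Hypothesis Hlie : lie_structure c.
Hypothesis sxi : forall a b j, smooth (xi a b j).
Hypothesis CX : forall a g d j x,
     \sum_(b < n) (xi a b j x * c b g d + c a b g * xi b d j x) = 0.

Definition XX (k : 'I_4) := fun a b => xi a b k.
Definition Qf := fun (i : 'I_4) (a : 'I_n) (p : jet R n) =>
       \sum_(b < n) \sum_(j < 4) xi a b j (jx p) * Fld c i j b p.

Lemma smXX k : smX (XX k).
Proof. by move=> a b; apply: sxi. Qed.

Lemma commXX k : commX c (XX k).
Proof. by move=> a g d x; apply: CX. Qed.

Lemma isG_add (G H : gfun R n) : isG G -> isG H -> isG (fun a q => G a q + H a q).
Proof. by move=> HG HH a; apply: isE_add. Qed.

Lemma isG_sum m (G : 'I_m -> gfun R n) : (forall k, isG (G k)) ->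
  isG (fun a q => \sum_(k < m) G k a q).
Proof. by move=> HG a; apply: isE_sum => k; apply: HG. Qed.

Lemma EQ j : Qf j = (fun a q => \sum_(k < 4) act (XX k) (Fld c j k) a q).
Proof.
apply: funext => a; apply: funext => q.
by rewrite /Qf /act exchange_big.
Qed.

Lemma E1 m j : nabla c m (Qf j) = (fun a q => \sum_(k < 4)
   (act (pX m (XX k)) (Fld c j k) a q + act (XX k) (nabla c m (Fld c j k)) a q)).
Proof.
rewrite EQ; apply: funext => a; apply: funext => q.
rewrite nabla_sum; last by move=> k; apply: isG_act; [apply: smXX|apply: isG_Fld].
apply: eq_bigr => k _; rewrite (nabla_act Hlie) //.
- exact: smXX.
- exact: commXX.
- exact: isG_Fld.
Qed.

Lemma E2 l m j a p : nabla c l (nabla c m (Qf j)) a p = \sum_(k < 4)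
   (act (pX l (pX m (XX k))) (Fld c j k) a p
    + act (pX m (XX k)) (nabla c l (Fld c j k)) a p
    + act (pX l (XX k)) (nabla c m (Fld c j k)) a p
    + act (XX k) (nabla c l (nabla c m (Fld c j k))) a p).
Proof.
rewrite E1 nabla_sum; last first.
  move=> k; apply: isG_add.
    by apply: isG_act; [apply: smX_pX; apply: smXX|apply: isG_Fld].
  by apply: isG_act; [apply: smXX|apply: isG_nabla; apply: isG_Fld].
apply: eq_bigr => k _.
rewrite nabla_add; first last.
- by apply: isG_act; [apply: smXX|apply: isG_nabla; apply: isG_Fld].
- by apply: isG_act; [apply: smX_pX; apply: smXX|apply: isG_Fld].
rewrite (nabla_act Hlie); first last.
- exact: isG_Fld.
- by apply: commX_pX; [apply: smXX|apply: commXX].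
- by apply: smX_pX; apply: smXX.
rewrite (nabla_act Hlie); first last.
- by apply: isG_nabla; apply: isG_Fld.
- exact: commXX.
- exact: smXX.
by rewrite !addrA.
Qed.


Lemma nabla_sym l (G H : gfun R n) a p :
  (forall q, sym_jet q -> forall b, G b q = H b q) -> sym_jet p ->
  nabla c l G a p = nabla c l H a p.
Proof.
move=> E sp; rewrite /nabla (Dtot_sym l (f:=G a) (g:=H a)); last exact: sp.
  congr (_ + _); apply: eq_bigr => b _; apply: eq_bigr => g _; by rewrite E.
by move=> q sq; apply: E.
Qed.

Lemma nablaYM k i a p : nabla c k (YM c i) a p =
  \sum_(j < 4) mink R j j * nabla c k (nabla c j (Fld c i j)) a p.
Proof.
rewrite /YM (@nabla_sum R n c 4 (fun j a q => mink R j j * nabla c j (Fld c i j) a q)).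
  by apply: eq_bigr => j _; rewrite nabla_scal //; apply: isG_nabla; apply: isG_Fld.
move=> j a'; apply: isE_mul; first exact: isE_cst.
by apply: isG_nabla; apply: isG_Fld.
Qed.

Lemma T0 p i k b : sym_jet p -> on_Rp c 1 p ->
  \sum_(j < 4) (mink R j j * (nabla c j (nabla c i (Fld c j k)) b p
                             - nabla c j (nabla c j (Fld c i k)) b p)
     - \sum_(d < n) \sum_(e < n) c b d e * (mink R j j * Fld c i j d p) * Fld c j k e p) = 0.
Proof.
move=> sp HR.
have Bf : forall j, nabla c j (nabla c j (Fld c i k)) b p
   = nabla c j (nabla c i (Fld c j k)) b p + nabla c j (nabla c k (Fld c i j)) b p.
  move=> j.
  rewrite (@nabla_sym j _ (fun a q => nabla c i (Fld c j k) a q + nabla c k (Fld c i j) a q)) //.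
    by rewrite nabla_add //; apply: isG_nabla; apply: isG_Fld.
  move=> q sq a; have := bianchi Hlie j i k a sq.
  rewrite (nablaF_anti Hlie i k j) (nablaF_anti Hlie k j i) => E.
  by apply/eqP; rewrite -subr_eq0 -E; apply/eqP; ring.
have Rc : forall j, nabla c j (nabla c k (Fld c i j)) b p
   = nabla c k (nabla c j (Fld c i j)) b p
     + \sum_(d < n) \sum_(e < n) c b d e * Fld c j k d p * Fld c i j e p.
  move=> j; rewrite -(ricci Hlie j k b (G := Fld c i j)) //; last exact: isG_Fld.
  ring.
have Y1 : \sum_(j < 4) mink R j j * nabla c k (nabla c j (Fld c i j)) b p = 0.
  rewrite -nablaYM; exact: (HR [:: k] isT i b).
apply: etrans (_ : _ = - \sum_(j < 4) mink R j j * nabla c k (nabla c j (Fld c i j)) b p) _;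
  last by rewrite Y1 oppr0.
rewrite -sumrN; apply: eq_bigr => j _.
rewrite Bf Rc.
have := sum_pair Hlie (fun d => Fld c j k d p) (fun e => Fld c i j e p) b.
have -> : \sum_(d < n) \sum_(e < n) c b d e * (Fld c j k d p * Fld c i j e p + Fld c i j d p * Fld c j k e p)
   = \sum_(d < n) \sum_(e < n) c b d e * Fld c j k d p * Fld c i j e p
   + \sum_(d < n) \sum_(e < n) c b d e * Fld c i j d p * Fld c j k e p.
  rewrite -big_split /=; apply: eq_bigr => d _; rewrite -big_split /=.
  by apply: eq_bigr => e _; ring.
have -> : \sum_(d < n) \sum_(e < n) c b d e * (mink R j j * Fld c i j d p) * Fld c j k e p
   = mink R j j * \sum_(d < n) \sum_(e < n) c b d e * Fld c i j d p * Fld c j k e p.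
  rewrite big_distrr /=; apply: eq_bigr => d _; rewrite big_distrr /=.
  by apply: eq_bigr => e _; ring.
move=> E.
have -> : \sum_(d < n) \sum_(e < n) c b d e * Fld c i j d p * Fld c j k e p
   = - \sum_(d < n) \sum_(e < n) c b d e * Fld c j k d p * Fld c i j e p.
  by apply/eqP; rewrite -subr_eq0 opprK addrC E.
ring.
Qed.

End PG.

Lemma comb (R : realType) (e z1 f1 y1 n1 y2 n2 X nn1 z2 f2 n3 nn2 S : R) :
  e * (z1 * f1 + y1 * n1 + y2 * n2 + X * nn1) - e * (z2 * f2 + y2 * n3 + y2 * n3 + X * nn2)
  - X * S
  = e * (z1 * f1 - z2 * f2) + e * (y1 * n1 + y2 * n2 - 2 * (y2 * n3))
    + X * (e * (nn1 - nn2) - S).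
Proof. ring. Qed.

Theorem proposition2p3 (R : realType) (n : nat)
  (c : 'I_n -> 'I_n -> 'I_n -> R)
  (xi : 'I_n -> 'I_n -> 'I_4 -> 'rV[R]_4 -> R)
  (k : 'I_n -> 'I_n -> 'rV[R]_4 -> R) :
  lie_structure c ->
  (forall a b j, smooth (xi a b j)) ->
  (forall (i j : 'I_4) a b x,
     (mink R i i * partial i (xi a b j) x + mink R j j * partial j (xi a b i) x) / 2
     = mink R i j * k a b x) ->
  (forall a g d j x,
     \sum_(b < n) (xi a b j x * c b g d + c a b g * xi b d j x) = 0) ->
  gen_symmetry c 1
    (fun (i : 'I_4) (a : 'I_n) (p : jet R n) =>
       \sum_(b < n) \sum_(j < 4) xi a b j (jx p) * Fld c i j b p).
Proof.
move=> Hlie sxi CK CX.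
change (gen_symmetry c 1 (Qf c xi)).
split.
  move=> i a p1 p2 Ex Eu; rewrite /Qf Ex.
  apply: eq_bigr => b _; apply: eq_bigr => j _; congr (_ * _).
  rewrite /Fld !Eu //; congr (_ + _).
  by apply: eq_bigr => d _; apply: eq_bigr => e _; rewrite !Eu.
move=> p sp HR i a.
rewrite /linYM.
set x := jx p.
have E2' : forall l m j, nabla c l (nabla c m [eta Qf c xi j]) a p =
  \sum_(k < 4) \sum_(b < n)
    (partial l (partial m (xi a b k)) x * Fld c j k b p
     + partial m (xi a b k) x * nabla c l (Fld c j k) b p
     + partial l (xi a b k) x * nabla c m (Fld c j k) b p
     + xi a b k x * nabla c l (nabla c m (Fld c j k)) b p).
  move=> l m j; rewrite (E2 Hlie sxi CX); apply: eq_bigr => kk _.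
  by rewrite /act -!big_split.
have E3 : forall j, \sum_(b < n) \sum_(g < n) c a b g * (mink R j j * Fld c i j b p) * Qf c xi j g p
  = \sum_(kk < 4) \sum_(b < n) xi a b kk x *
      (\sum_(d < n) \sum_(e < n) c b d e * (mink R j j * Fld c i j d p) * Fld c j kk e p).
  move=> j; rewrite (EQ c xi) /act.
  have -> : \sum_(b < n) \sum_(g < n) c a b g * (mink R j j * Fld c i j b p) *
      (\sum_(kk < 4) \sum_(d < n) XX xi kk g d (jx p) * Fld c j kk d p)
    = \sum_(kk < 4) \sum_(b < n) \sum_(g < n) c a b g * (mink R j j * Fld c i j b p) *
      (\sum_(d < n) XX xi kk g d x * Fld c j kk d p).
    rewrite [RHS]exchange_big /=; apply: eq_bigr => b _.
    rewrite [RHS]exchange_big /=; apply: eq_bigr => g _.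
    by rewrite big_distrr.
  apply: eq_bigr => kk _.
  by rewrite (commX_br Hlie x (fun d => mink R j j * Fld c i j d p) (fun e => Fld c j kk e p) a (commXX CX kk)).
under eq_bigr do rewrite E2'.
under [X in _ - _ - X]eq_bigr do rewrite E3.
under [X in _ - X - _]eq_bigr do rewrite E2'.
pose T2t j kk b := mink R j j * (partial j (partial i (xi a b kk)) x * Fld c j kk b p
       - partial j (partial j (xi a b kk)) x * Fld c i kk b p).
pose T1t j kk b := mink R j j * (partial i (xi a b kk) x * nabla c j (Fld c j kk) b p
       + partial j (xi a b kk) x * nabla c i (Fld c j kk) b p
       - 2 * (partial j (xi a b kk) x * nabla c j (Fld c i kk) b p)).
pose T0t j kk b := mink R j j * (nabla c j (nabla c i (Fld c j kk)) b p
                             - nabla c j (nabla c j (Fld c i kk)) b p)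
     - \sum_(d < n) \sum_(e < n) c b d e * (mink R j j * Fld c i j d p) * Fld c j kk e p.
rewrite -!sumrB.
rewrite (eq_bigr (fun j => \sum_(kk < 4) \sum_(b < n)
     (T2t j kk b + T1t j kk b + xi a b kk x * T0t j kk b))); last first.
  move=> j _; rewrite !mulr_sumr -!sumrB; apply: eq_bigr => kk _.
  rewrite !mulr_sumr -!sumrB; apply: eq_bigr => b _.
  rewrite /T2t /T1t /T0t; apply: comb.
have diag : forall a b (i : 'I_4) y, partial i (xi a b i) y = k a b y.
  move=> a' b' i' y; have := CK i' i' a' b' y.
  have -> : (mink R i' i' * partial i' (xi a' b' i') y + mink R i' i' * partial i' (xi a' b' i') y) / 2
     = mink R i' i' * partial i' (xi a' b' i') y.
    by rewrite -mulr2n -[X in X / _]mulr_natr mulfK // pnatr_eq0.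
  move/(mulfI (mink_neq0 R i')) => //.
have offd : forall a b (i j : 'I_4) y, i != j ->
    mink R i i * partial i (xi a b j) y + mink R j j * partial j (xi a b i) y = 0.
  move=> a' b' i' j' y nij; have := CK i' j' a' b' y.
  rewrite (mink_off R nij) mul0r => /eqP; rewrite mulf_eq0 invr_eq0 pnatr_eq0 orbF.
  by move/eqP.
rewrite (_ : \sum_(i0 < 4) \sum_(kk < 4) \sum_(b < n) (T2t i0 kk b + T1t i0 kk b + xi a b kk x * T0t i0 kk b)
  = \sum_(b < n) \sum_(i0 < 4) \sum_(kk < 4) T2t i0 kk b
  + \sum_(b < n) \sum_(i0 < 4) \sum_(kk < 4) T1t i0 kk b
  + \sum_(kk < 4) \sum_(b < n) xi a b kk x * \sum_(i0 < 4) T0t i0 kk b); last first.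
  have X1 : forall (F : 'I_4 -> 'I_4 -> 'I_n -> R),
     \sum_(i0 < 4) \sum_(kk < 4) \sum_(b < n) F i0 kk b = \sum_(b < n) \sum_(i0 < 4) \sum_(kk < 4) F i0 kk b.
    by move=> F; under eq_bigr do rewrite exchange_big; rewrite exchange_big.
  have X2 : \sum_(i0 < 4) \sum_(kk < 4) \sum_(b < n) xi a b kk x * T0t i0 kk b
     = \sum_(kk < 4) \sum_(b < n) xi a b kk x * \sum_(i0 < 4) T0t i0 kk b.
    rewrite exchange_big; apply: eq_bigr => kk _; rewrite exchange_big; apply: eq_bigr => b _.
    by rewrite mulr_sumr.
  rewrite -X2 -!X1 -!big_split; apply: eq_bigr => j _; rewrite -!big_split.
  by apply: eq_bigr => kk _; rewrite -!big_split.
rewrite [X in _ + _ + X]big1 ?addr0; last first.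
  move=> kk _; rewrite big1 // => b _.
  by rewrite /T0t (T0 Hlie i kk b sp HR) mulr0.
rewrite [X in _ + X]big1 ?addr0; last first.
  move=> b _; rewrite /T1t.
  exact: (T1_scalar (Y := fun m kk => partial m (xi a b kk) x) (ka := k a b x)
     (N := fun m j kk => nabla c m (Fld c j kk) b p) i
     (fun m kk => CK m kk a b x) (fun m j kk => nablaF_anti Hlie m kk j b p)
     (fun m j kk => bianchi Hlie m j kk b sp) (fun kk => HR [::] isT kk b)).
rewrite big1 // => b _; rewrite /T2t.
apply: (T2_scalar (w := fun m a' b' => partial m (partial a' (xi a b b')) x)
   (K := fun m => partial m (partial ord0 (xi a b ord0)) x)
   (F := fun j kk => Fld c j kk b p) i).
- by move=> m a' b'; apply: schwarz.
- move=> m a'; apply: partial_ext => y.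
  by rewrite diag diag.
- move=> m a' b' nab.
  rewrite -partial_lin; first last.
  + by apply: smooth_diff; apply: smooth_partial.
  + by apply: smooth_diff; apply: smooth_partial.
  rewrite (partial_ext m x (g := fun _ => 0)); first by rewrite partial_cst.
  by move=> y; rewrite offd.
- by move=> j kk; rewrite Fld_anti.
Qed.
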